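(* Agrachev–Gamkrelidze monomial bases of the free pre-Lie algebra with one generator $(\mathcal{T},\to)$ are tree-grounded. Precisely: define sets of monomials $\mathcal{M}_n$ recursively by $\mathcal{M}_1=\{\bullet\}$ and, given $\mathcal{M}_1,\dots,\mathcal{M}_{n-1}$ with a total order on $\mathcal{M}_1\sqcup\dots\sqcup\mathcal{M}_{n-1}$ which restricts to an arbitrary total order on each $\mathcal{M}_j$ and satisfies $x>x'$ whenever $x\in\mathcal{M}_j$, $x'\in\mathcal{M}_{j'}$, $j>j'$, $$\mathcal{M}_n=\Big\{x_1\to\big(x_2\to(\cdots\to(x_r\to\bullet)\cdots)\big)\ \Big|\ r\ge 1,\ x_k\in\mathcal{M}_{j_k},\ \textstyle\sum_{k=1}^r j_k=n-1,\ x_1\ge x_2\ge\cdots\ge x_r\Big\}.$$ Then for every $n\ge 1$, replacing the grafting $\to$ by the Butcher product $\circ\!\!\rightarrow$ in each monomial of $\mathcal{M}_n$ yields every non-planar rooted tree with $n$ vertices exactly once.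
   Context: $\mathcal{T}$ is the vector space spanned by non-planar rooted trees; $\bullet$ is the one-vertex tree. The grafting $s\to t=\sum_{v\in V(t)}s\to_v t$ (graft the root of $s$ by a new edge onto vertex $v$ of $t$) makes $\mathcal{T}$ the free pre-Lie algebra on $\bullet$, graded by number of vertices. $B_+(t_1\cdots t_k)$ denotes the tree obtained by attaching the roots of $t_1,\dots,t_k$ to a new root; the Butcher product is $s\circ\!\!\rightarrow B_+(t_1\cdots t_k)=B_+(s\,t_1\cdots t_k)$. A monomial is a parenthesized word in $\bullet$ and one binary operation; its lower-energy term is its evaluation with the Butcher product. A monomial basis (set of monomials whose grafting-evaluations form a basis) of the degree-$n$ component is tree-grounded if its lower-energy terms are exactly the rooted trees with $n$ vertices, each once. *)

(* Defs.v *)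
From Stdlib Require Import List Permutation.
From mathcomp Require Import all_boot.
Set Implicit Arguments. Unset Strict Implicit. Unset Printing Implicit Defensive.

Inductive mon : Type :=
| Dot : mon
| Op : mon -> mon -> mon.    (* Op x y  stands for  x -> y *)

Fixpoint deg (m : mon) : nat :=
  match m with Dot => 1 | Op a b => deg a + deg b end.

Fixpoint comb (xs : seq mon) : mon :=
  match xs with [::] => Dot | x :: xs' => Op x (comb xs') end.

(* ---------- Planar rooted trees; non-planar trees = planar trees up to iso ---------- *)
Inductive rtree : Type := Node : seq rtree -> rtree.

Fixpoint vsize (t : rtree) : nat :=
  match t with Node ts => (sumn (map vsize ts)).+1 end.

Inductive iso : rtree -> rtree -> Prop :=
| iso_node (ts us us' : seq rtree) :
    Permutation us us' -> Forall2 iso ts us' -> iso (Node ts) (Node us).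

Definition butcher (s t : rtree) : rtree :=
  match t with Node ts => Node (s :: ts) end.

Fixpoint lower (m : mon) : rtree :=
  match m with Dot => Node [::] | Op a b => butcher (lower a) (lower b) end.

(* ---------- Agrachev--Gamkrelidze sets M_n ----------
   ord y x  means  "y <= x" for the chosen order on monomials of the same degree. *)
Definition ag_ge (ord : rel mon) : rel mon :=
  fun x y => (deg y < deg x) || ((deg x == deg y) && ord y x).

Inductive inM (ord : rel mon) : nat -> mon -> Prop :=
| inM1 : inM ord 1 Dot
| inMS (xs : seq mon) :
    (0 < size xs)%N ->
    (forall x, List.In x xs -> inM ord (deg x) x) ->
    sorted (ag_ge ord) xs ->
    inM ord (sumn (map deg xs)).+1 (comb xs).

Definition total_order_on (ord : rel mon) (P : mon -> Prop) : Prop :=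
  (forall x, P x -> ord x x) /\
  (forall x y, P x -> P y -> ord x y -> ord y x -> x = y) /\
  (forall x y z, P x -> P y -> P z -> ord x y -> ord y z -> ord x z) /\
  (forall x y, P x -> P y -> ord x y || ord y x).

(* Main.v *)
Require Import Defs.
From Stdlib Require Import List Permutation.
From mathcomp Require Import all_boot.
From mathcomp Require Import zify.
Set Implicit Arguments.

Lemma smap_eq (A B : Type) (f : A -> B) (l : seq A) : seq.map f l = List.map f l.
Proof. by elim: l => //= a l ->. Qed.

Lemma size_len (A : Type) (l : seq A) : size l = length l.
Proof. by elim: l => //= a l ->. Qed.

Lemma lower_comb xs : lower (comb xs) = Node (seq.map lower xs).
Proof. by elim: xs => //= x xs ->. Qed.

Lemma vsize_lower m : vsize (lower m) = deg m.
Proof.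
elim: m => //= a IHa b IHb; case: (lower b) IHb => ts /= <-.
by rewrite IHa addnS.
Qed.

Lemma deg_comb xs : deg (comb xs) = (sumn (seq.map deg xs)).+1.
Proof. elim: xs => //= x xs ->; by rewrite addnS. Qed.

Lemma deg_gt0 m : (0 < deg m)%N.
Proof. elim: m => //= a Ha b Hb; lia. Qed.

Lemma inM_deg ord k m : inM ord k m -> deg m = k.
Proof. case=> //= xs _ _ _; elim: xs => //= x xs ->; by rewrite addnS. Qed.

Lemma inM_inv ord k m : inM ord k m ->
  m = Dot \/ exists xs, m = comb xs /\ (0 < size xs)%N /\
     (forall x, List.In x xs -> inM ord (deg x) x) /\ sorted (ag_ge ord) xs.
Proof. case; [by left | move=> xs H1 H2 H3; right; by exists xs]. Qed.

Lemma sumn_perm l1 l2 : Permutation l1 l2 -> sumn l1 = sumn l2.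
Proof.
elim=> //= [x l l' _ -> | x y l | l l' l'' _ -> _ ->] //.
by rewrite addnCA.
Qed.

Lemma deg_le_sum x xs : List.In x xs -> (deg x <= sumn (seq.map deg xs))%N.
Proof.
elim: xs => //= a l IH [-> | H]; first by rewrite leq_addr.
by apply: leq_trans (IH H) _; rewrite leq_addl.
Qed.

Section Sorting.
Variable R : rel mon.
Variable S : mon -> Prop.
Hypothesis Rtr : forall x y z, S x -> S y -> S z -> R x y -> R y z -> R x z.
Hypothesis Ranti : forall x y, S x -> S y -> R x y -> R y x -> x = y.
Hypothesis Rtot : forall x y, S x -> S y -> R x y || R y x.

Lemma path_head x l : S x -> (forall z, List.In z l -> S z) -> path R x l ->
  forall z, List.In z l -> R x z.
Proof.
elim: l x => //= a l IH x Sx Sl /andP[Hxa Hp] z [<- // | Hz].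
apply: (Rtr Sx (Sl a (or_introl erefl)) (Sl z (or_intror Hz)) Hxa).
apply: (IH a (Sl a (or_introl erefl))) => //.
by move=> w Hw; apply: Sl; right.
Qed.

Lemma sorted_perm_eq xs ys : Permutation xs ys -> (forall x, List.In x xs -> S x) ->
  sorted R xs -> sorted R ys -> xs = ys.
Proof.
elim: xs ys => [|x xs IH] ys Hp HS Hsx Hsy.
  by rewrite (Permutation_nil Hp).
case: ys Hp Hsy => [|y ys] Hp Hsy.
  by move: (Permutation_nil (Permutation_sym Hp)).
have HSy : forall z, List.In z (y :: ys) -> S z.
  by move=> z Hz; apply: HS; apply: Permutation_in _ (Permutation_sym Hp) Hz.
have Ryx : R y x.
  have : List.In x (y :: ys).
  apply: (Permutation_in x Hp).
  by left.
  case=> [-> | Hx]; first by case/orP: (Rtot (HS x (or_introl erefl)) (HS x (or_introl erefl))).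
  apply: (path_head ys (HSy y (or_introl erefl)) _ Hsy x Hx).
  by move=> z Hz; apply: HSy; right.
have Rxy : R x y.
  have : List.In y (x :: xs) by apply: (Permutation_in y (Permutation_sym Hp)); left.
  case=> [<- | Hy]; first by case/orP: (Rtot (HS x (or_introl erefl)) (HS x (or_introl erefl))).
  apply: (path_head xs (HS x (or_introl erefl)) _ Hsx y Hy).
  by move=> z Hz; apply: HS; right.
have exy := Ranti (HS x (or_introl erefl)) (HSy y (or_introl erefl)) Rxy Ryx.
subst y; congr (_ :: _); apply: IH.
- exact: Permutation_cons_inv Hp.
- by move=> z Hz; apply: HS; right.
- exact: path_sorted Hsx.
- exact: path_sorted Hsy.
Qed.

Fixpoint ins (x : mon) (l : seq mon) : seq mon :=
  match l with [::] => [:: x] | y :: l' => if R x y then x :: y :: l' else y :: ins x l' end.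

Fixpoint isort (l : seq mon) : seq mon :=
  match l with [::] => [::] | x :: l' => ins x (isort l') end.

Lemma ins_perm x l : Permutation (x :: l) (ins x l).
Proof.
elim: l => //= y l IH; case: (R x y) => //.
apply: Permutation_trans; [apply: perm_swap | apply: perm_skip; exact: IH].
Qed.

Lemma isort_perm l : Permutation l (isort l).
Proof.
elim: l => //= x l IH; exact: (Permutation_trans (perm_skip x IH) (ins_perm x (isort l))).
Qed.

Lemma ins_path y x l : S x -> (forall z, List.In z l -> S z) -> R y x -> path R y l ->
  path R y (ins x l).
Proof.
elim: l y => /= [|z l IH] y Sx Sl Ryx Hp; first by rewrite Ryx.
case/andP: Hp => Ryz Hp.
case Rxz: (R x z); first by rewrite /= Ryx Rxz.
rewrite /= Ryz /=; apply: IH => //.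
- by move=> w Hw; apply: Sl; right.
- by case/orP: (Rtot Sx (Sl z (or_introl erefl))) => //; rewrite Rxz.
Qed.

Lemma isort_sorted l : (forall z, List.In z l -> S z) -> sorted R (isort l).
Proof.
elim: l => //= x l IH Sl.
have Sl' : forall z, List.In z (isort l) -> S z.
  by move=> z Hz; apply: Sl; right; apply: Permutation_in _ (Permutation_sym (isort_perm l)) Hz.
have Sx := Sl x (or_introl erefl).
have := IH (fun z Hz => Sl z (or_intror Hz)).
case: (isort l) Sl' => //= y l' Sl' Hp.
case Rxy: (R x y) => /=; first by rewrite Rxy Hp.
apply: ins_path => //.
- by move=> w Hw; apply: Sl'; right.
- by case/orP: (Rtot Sx (Sl' y (or_introl erefl))) => //; rewrite Rxy.
Qed.
End Sorting.

Section Main.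
Variable ord : rel mon.
Hypothesis Hord : forall j, total_order_on ord (inM ord j).
Let S := fun x => inM ord (deg x) x.

Lemma ag_tr x y z : S x -> S y -> S z -> ag_ge ord x y -> ag_ge ord y z -> ag_ge ord x z.
Proof.
rewrite /S /ag_ge => Sx Sy Sz.
case/orP=> [H1 | /andP[/eqP e1 o1]]; case/orP=> [H2 | /andP[/eqP e2 o2]].
- by rewrite (ltn_trans H2 H1).
- by rewrite -e2 H1.
- by rewrite e1 H2.
- apply/orP; right; rewrite e1 e2 eqxx /=.
  have [_ [_ [T _]]] := Hord (deg x).
  apply: (T z y x) => //; first [exact: Sx | by rewrite e1 | by rewrite e1 e2].
Qed.

Lemma ag_anti x y : S x -> S y -> ag_ge ord x y -> ag_ge ord y x -> x = y.
Proof.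
rewrite /S /ag_ge => Sx Sy.
case/orP=> [H1 | /andP[/eqP e1 o1]]; case/orP=> [H2 | /andP[/eqP e2 o2]].
- by move: (ltn_trans H2 H1); rewrite ltnn.
- by move: H1; rewrite e2 ltnn.
- by move: H2; rewrite e1 ltnn.
- have [_ [A _]] := Hord (deg x).
  by apply: A => //; rewrite e1.
Qed.

Lemma ag_tot x y : S x -> S y -> ag_ge ord x y || ag_ge ord y x.
Proof.
rewrite /S /ag_ge => Sx Sy.
case: (ltngtP (deg x) (deg y)) => [H|H|e] //=.
have [_ [_ [_ T]]] := Hord (deg y).
by rewrite orbC; apply: T => //; rewrite -e.
Qed.

Lemma forall2_eq (xs ys : seq mon) :
  Forall2 (fun x y => iso (lower x) (lower y)) xs ys ->
  (forall x y, List.In x xs -> List.In y ys -> iso (lower x) (lower y) -> x = y) ->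
  xs = ys.
Proof.
elim=> //= x y l l' Hi _ IH H.
rewrite (H x y (or_introl erefl) (or_introl erefl) Hi); congr (_ :: _).
by apply: IH => a b Ha Hb; apply: H; right.
Qed.

Lemma forall2_map_inv (xs ys : seq mon) :
  Forall2 iso (List.map lower xs) (List.map lower ys) ->
  Forall2 (fun x y => iso (lower x) (lower y)) xs ys.
Proof.
elim: xs ys => [|x xs IH] [|y ys] /= H; inversion H => //.
by constructor => //; apply: IH.
Qed.

Lemma uniq_main N : forall m1 m2, (deg m1 + deg m2 <= N)%N ->
  S m1 -> S m2 -> iso (lower m1) (lower m2) -> m1 = m2.
Proof.
elim: N => [|N IH] m1 m2 HN S1 S2 Hi.
  by move: HN (deg_gt0 m1); lia.
case: (inM_inv S1) => [E1 | [xs [E1 [Sz1 [Sx1 So1]]]]];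
case: (inM_inv S2) => [E2 | [ys [E2 [Sz2 [Sx2 So2]]]]]; subst m1 m2.
- by [].
- move: Hi; rewrite lower_comb /= => Hi; inversion Hi as [ts us us0 P F]; subst.
  inversion F; subst.
  move: (Permutation_nil (Permutation_sym P)).
  by case: ys Sz2 {Sx2 So2 HN S2 Hi P F}.
- move: Hi; rewrite lower_comb /= => Hi; inversion Hi as [ts us us0 P F]; subst.
  move: (Permutation_nil P) => E; subst.
  by case: xs Sz1 {Sx1 So1 HN S1 Hi} F => //= x xs _ F; inversion F.
- move: Hi; rewrite !lower_comb => Hi; inversion Hi as [ts us us0 P F]; subst.
  rewrite !smap_eq in P F.
  have [l3 [E3 P3]] := Permutation_map_inv _ _ (Permutation_sym P).
  subst us0.
  have Hxl : xs = l3.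
    apply: forall2_eq; first exact: forall2_map_inv.
    move=> x y Hx Hy Hxy.
    have Hy' : List.In y ys by apply: (Permutation_in y (Permutation_sym P3) Hy).
    apply: IH => //; [| exact: Sx1 | exact: Sx2].
    have := @deg_le_sum x xs Hx; have := @deg_le_sum y ys Hy'.
    move: HN; rewrite !deg_comb; lia.
  subst l3; congr comb.
  exact: (sorted_perm_eq (ag_ge ord) S (@ag_tr) (@ag_anti) (@ag_tot) (Permutation_sym P3) Sx1 So1 So2).
Qed.

Lemma exist_main N : forall t, (vsize t <= N)%N ->
  exists m, inM ord (vsize t) m /\ iso (lower m) t.
Proof.
elim: N => [|N IH] [ts] //= Hs.
have Hc : forall t, List.In t ts -> exists m, inM ord (vsize t) m /\ iso (lower m) t.
  move=> t Ht; apply: IH.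
  have : (vsize t <= sumn (seq.map vsize ts))%N.
    elim: ts Ht {Hs} => //= a l IHl [-> | H]; first by rewrite leq_addr.
    by apply: leq_trans (IHl H) _; rewrite leq_addl.
  move: Hs; lia.
have [ms Hms] : exists ms, Forall2 (fun m t => inM ord (vsize t) m /\ iso (lower m) t) ms ts.
  elim: ts Hc {Hs} => [|t ts IHt] Hc; first by exists [::].
  have [m Hm] := Hc t (or_introl erefl).
  have [ms Hms] := IHt (fun u Hu => Hc u (or_intror Hu)).
  by exists (m :: ms); constructor.
have HSms : forall x, List.In x ms -> S x.
  move=> x Hx; elim: Hms Hx {Hc Hs} => //= m t l l' [Hm _] _ IHm [<- | Hx].
    by rewrite /S (inM_deg Hm).
  exact: IHm.
have Hsum : sumn (seq.map deg ms) = sumn (seq.map vsize ts).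
  elim: Hms {Hc Hs HSms} => //= m t l l' [Hm _] _ ->.
  by rewrite (inM_deg Hm).
case: ts Hc Hs Hms Hsum => [|t0 ts] Hc Hs Hms Hsum.
  exists Dot; split; first exact: inM1.
  by apply: (iso_node (us' := [::])).
set srt := isort (ag_ge ord) ms.
have Pm := isort_perm (ag_ge ord) ms.
exists (comb srt); split.
- have -> : (sumn (seq.map vsize (t0 :: ts))).+1 = (sumn (seq.map deg srt)).+1.
    by rewrite -Hsum !smap_eq (sumn_perm (Permutation_map deg Pm)).
  apply: inMS.
  + have := Permutation_length Pm; rewrite /srt -!size_len => <-.
    by inversion Hms.
  + by move=> x Hx; apply: HSms; apply: (Permutation_in x (Permutation_sym Pm) Hx).
  + exact: (isort_sorted (ag_ge ord) S (@ag_tot) ms HSms).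
- rewrite lower_comb smap_eq.
  have Hf : Forall2 iso (List.map lower ms) (t0 :: ts).
    elim: Hms {Hc Hs HSms Hsum Pm srt} => //= m t l l' [_ Hm] _ IHm.
    by constructor.
  have [l2 [P2 F2]] := Permutation_Forall2 (Permutation_map lower Pm) Hf.
  exact: (iso_node P2 F2).
Qed.
End Main.

Unset Implicit Arguments.
Theorem lemma3p5 (ord : rel mon) :
  (forall j, total_order_on ord (inM ord j)) ->
  forall n : nat, (1 <= n)%N ->
    (forall m, inM ord n m -> vsize (lower m) = n) /\
    (forall t : rtree, vsize t = n -> exists m, inM ord n m /\ iso (lower m) t) /\
    (forall m1 m2, inM ord n m1 -> inM ord n m2 -> iso (lower m1) (lower m2) -> m1 = m2).
Proof.
move=> Hord n _; split; [|split].
- by move=> m Hm; rewrite vsize_lower (inM_deg Hm).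
- move=> t <-; exact: (exist_main Hord (vsize t) t (leqnn _)).
- move=> m1 m2 H1 H2 Hi.
  apply: (uniq_main Hord (deg m1 + deg m2) (leqnn _)) => //.
  + by rewrite /= (inM_deg H1).
  + by rewrite /= (inM_deg H2).
Qed.
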